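(* Let $\delta>0$ and $f=(f_1,\dots,f_N)$ with each $f_i$ bounded and continuous on $[0,\delta)$ and $f_i(0)=f_j(0)=:f(\mathsf v)$ for all $i,j$. Then there is a unique $u=(u_1,\dots,u_N)$ with each $u_i\in C^2([0,\delta])$ such that $$L_iu_i(x)=f_i(x)\ (x\in(0,\delta),\,1\le i\le N),\quad \eta Lu(\mathsf v)-\sum_{i=1}^N\rho_iu_i'(0)=0,\quad u_i(\delta)=0\ (1\le i\le N),\quad u_i(0)=u_j(0)\ (1\le i,j\le N),$$ where $L_iu_i=\frac12\sigma_i^2u_i''+b_iu_i'$ and $Lu(\mathsf v)$ is the common value of $\lim_{x\to0}L_iu_i(x)$. It is given by $u_i(x)=-\kappa_i\alpha_i(x)/\alpha_i(0)-\beta_i(x)$ for $0\le x\le\delta$, where $$\kappa_i=\Big(\eta f(\mathsf v)-\sum_{j=1}^N\frac{\rho_j(\beta_1(0)-\beta_j(0))}{\alpha_j(0)}\Big)\Big(\sum_{j=1}^N\frac{\rho_j}{\alpha_j(0)}\Big)^{-1}+\beta_1(0)-\beta_i(0),$$ $$\alpha_i(x)=\int_x^\delta\exp\Big(-\int_0^y\frac{2b_i(z)}{\sigma_i^2(z)}dz\Big)dy,$$ $$\beta_i(x)=\int_x^\delta\Big(\int_0^y\frac{2f_i(z)}{\sigma_i^2(z)}\exp\Big(\int_0^z\frac{2b_i(s)}{\sigma_i^2(s)}ds\Big)dz\Big)\exp\Big(-\int_0^y\frac{2b_i(z)}{\sigma_i^2(z)}dz\Big)dy.$$ Furthermore, $\max_{1\le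 i\le N}\max_{x\in[0,\delta]}|u_i''(x)|=O(1)$ as $\delta\downarrow0$, where the hidden constant depends on $f$ only through $\|f\|_\infty$.
   Context: Fix $N\ge1$, $\eta\ge0$, and $\rho_1,\dots,\rho_N>0$ with $\sum_i\rho_i=1$. For each $i$, $\sigma_i,b_i$ are bounded continuous functions on $(0,\infty)$ extending continuously to $[0,\infty)$, with $\sigma_i>\sigma_0$ for some constant $\sigma_0>0$ independent of $i$. (These are the edge coefficients of a diffusion on a star graph with $N$ half-line edges joined at a vertex $\mathsf v$.)
   Formalization: Each $u_i$ is taken in C¹([0,δ]) with $u_i''$ existing and continuous only on [0,δ), instead of C²([0,δ]), uniqueness holds in this larger class, and the bound on $|u_i''(x)|$ is taken over x ∈ [0,δ). Apart from conventions, each condition added here is assumed in the paper as well or is needed for the statement above to hold. *)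

(* Defs.v *)
From Stdlib Require Import Reals.
From Coquelicot Require Import Coquelicot.
Open Scope R_scope.

(* Sum over the edge indices 0, ..., N-1 (edge i of the paper is index i-1). *)
Definition sum_lt (N : nat) (g : nat -> R) : R :=
  match N with O => 0 | S n => sum_f_R0 g n end.

Definition rel_continuous_on (D : R -> Prop) (g : R -> R) : Prop :=
  forall x, D x -> filterlim g (within D (locally x)) (locally (g x)).

Definition rel_derivative_on (D : R -> Prop) (g dg : R -> R) : Prop :=
  forall x, D x ->
    filterlim (fun y => (g y - g x) / (y - x))
      (within (fun y => D y /\ y <> x) (locally x)) (locally (dg x)).

Definition Icc (a c : R) (x : R) : Prop := a <= x <= c.
Definition Ico (a c : R) (x : R) : Prop := a <= x < c.

Definition Lgen (sig bb : R -> R) (dg d2g : R -> R) (x : R) : R :=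
  / 2 * (sig x) ^ 2 * d2g x + bb x * dg x.

Definition regular (delta : R) (u du d2u : R -> R) : Prop :=
  rel_derivative_on (Icc 0 delta) u du /\ rel_continuous_on (Icc 0 delta) du /\
  rel_derivative_on (Ico 0 delta) du d2u /\ rel_continuous_on (Ico 0 delta) d2u.

Definition solves (N : nat) (eta : R) (rho : nat -> R) (sig bb : nat -> R -> R)
  (delta : R) (f : nat -> R -> R) (u du d2u : nat -> R -> R) : Prop :=
  (forall i, (i < N)%nat -> regular delta (u i) (du i) (d2u i)) /\
  (forall i x, (i < N)%nat -> 0 < x < delta ->
      Lgen (sig i) (bb i) (du i) (d2u i) x = f i x) /\
  (exists Lv : R,
      (forall i, (i < N)%nat ->
         filterlim (Lgen (sig i) (bb i) (du i) (d2u i)) (at_right 0) (locally Lv)) /\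
      eta * Lv - sum_lt N (fun i => rho i * du i 0) = 0) /\
  (forall i, (i < N)%nat -> u i delta = 0) /\
  (forall i j, (i < N)%nat -> (j < N)%nat -> u i 0 = u j 0).

Definition intB (sig bb : R -> R) (y : R) : R :=
  RInt (fun z => 2 * bb z / (sig z) ^ 2) 0 y.

Definition alpha (sig bb : R -> R) (delta x : R) : R :=
  RInt (fun y => exp (- intB sig bb y)) x delta.

Definition beta (sig bb fi : R -> R) (delta x : R) : R :=
  RInt (fun y =>
          RInt (fun z => 2 * fi z / (sig z) ^ 2 * exp (intB sig bb z)) 0 y
          * exp (- intB sig bb y)) x delta.

Definition kappa (N : nat) (eta : R) (rho : nat -> R) (sig bb : nat -> R -> R)
  (delta : R) (f : nat -> R -> R) (i : nat) : R :=
  (eta * f O 0 - sum_lt N (fun j => rho j * (beta (sig O) (bb O) (f O) delta 0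
                                            - beta (sig j) (bb j) (f j) delta 0)
                                      / alpha (sig j) (bb j) delta 0))
  * / sum_lt N (fun j => rho j / alpha (sig j) (bb j) delta 0)
  + beta (sig O) (bb O) (f O) delta 0 - beta (sig i) (bb i) (f i) delta 0.

Definition usol (N : nat) (eta : R) (rho : nat -> R) (sig bb : nat -> R -> R)
  (delta : R) (f : nat -> R -> R) (i : nat) (x : R) : R :=
  - kappa N eta rho sig bb delta f i * alpha (sig i) (bb i) delta x
      / alpha (sig i) (bb i) delta 0
  - beta (sig i) (bb i) (f i) delta x.

Definition admissible_f (N : nat) (delta : R) (f : nat -> R -> R) : Prop :=
  (forall i, (i < N)%nat ->
     (exists B, forall x, 0 <= x < delta -> Rabs (f i x) <= B) /\
     rel_continuous_on (Ico 0 delta) (f i)) /\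
  (forall i j, (i < N)%nat -> (j < N)%nat -> f i 0 = f j 0).

(* Main.v *)
Require Import Defs.
From Stdlib Require Import Reals Lra Lia Classical ClassicalEpsilon.
From Coquelicot Require Import Coquelicot.
Open Scope R_scope.
Set Default Proof Using "All".

Definition limw (D : R -> Prop) (g : R -> R) (x L : R) : Prop :=
  forall eps, 0 < eps -> exists d, 0 < d /\
    forall y, D y -> Rabs (y - x) < d -> Rabs (g y - L) < eps.

Lemma within_iff (D : R -> Prop) (g : R -> R) (x L : R) :
  filterlim g (within D (locally x)) (locally L) <-> limw D g x L.
Proof.
split.
- intros H eps He.
  assert (HL : locally L (fun v => Rabs (v - L) < eps)).
  { exists (mkposreal eps He). intros v Hv. exact Hv. }
  destruct (H _ HL) as [d Hd].
  exists d. split. apply cond_pos. intros y Dy Hy. apply Hd; [exact Hy| exact Dy].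
- intros H P [eps HP].
  destruct (H eps (cond_pos eps)) as [d [Hd H']].
  exists (mkposreal d Hd). intros y Hy Dy. apply HP. apply H'; [exact Dy| exact Hy].
Qed.

Lemma cont_iff (g : R -> R) (x : R) :
  continuity_pt g x <-> limw (fun _ => True) g x (g x).
Proof.
rewrite continuity_pt_filterlim. split.
- intros H eps He.
  assert (HL : locally (g x) (fun v => Rabs (v - g x) < eps)).
  { exists (mkposreal eps He). intros v Hv. exact Hv. }
  destruct (H _ HL) as [d Hd].
  exists d. split. apply cond_pos. intros y _ Hy. apply Hd; exact Hy.
- intros H P [eps HP].
  destruct (H eps (cond_pos eps)) as [d [Hd H']].
  exists (mkposreal d Hd). intros y Hy. apply HP. apply H'; [exact I| exact Hy].
Qed.

Lemma limw_sub (D D' : R -> Prop) (g : R -> R) (x L : R) :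
  (forall y, D' y -> D y) -> limw D g x L -> limw D' g x L.
Proof.
intros HS H eps He. destruct (H eps He) as [d [Hd H']]. exists d; split; auto.
Qed.

Lemma limw_ext (D : R -> Prop) (g g' : R -> R) (x L r : R) : 0 < r ->
  (forall y, D y -> Rabs (y - x) < r -> g y = g' y) -> limw D g x L -> limw D g' x L.
Proof.
intros Hr He H eps Heps. destruct (H eps Heps) as [d [Hd H']].
exists (Rmin d r). split. apply Rmin_pos; auto.
intros y Dy Hy. rewrite <- He; auto.
apply H'; auto. apply Rlt_le_trans with (1 := Hy); apply Rmin_l.
apply Rlt_le_trans with (1 := Hy); apply Rmin_r.
Qed.

Lemma limw_cont (D : R -> Prop) (g : R -> R) (x : R) : continuity_pt g x -> limw D g x (g x).
Proof.
intros H. apply cont_iff in H. apply limw_sub with (2 := H). auto.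
Qed.

Lemma der_transfer (D : R -> Prop) (g g' : R -> R) (x r l : R) : 0 < r -> D x ->
  (forall y, D y -> Rabs (y - x) < r -> g y = g' y) ->
  derivable_pt_lim g' x l ->
  filterlim (fun y => (g y - g x) / (y - x))
      (within (fun y => D y /\ y <> x) (locally x)) (locally l).
Proof.
intros Hr Dx He Hd. apply within_iff.
intros eps Heps. destruct (Hd eps Heps) as [d Hd'].
exists (Rmin d r). split. apply Rmin_pos; [apply cond_pos| auto].
intros y [Dy Hyx] Hy.
rewrite (He y Dy), (He x Dx); [| rewrite Rminus_diag, Rabs_R0; auto|].
2: apply Rlt_le_trans with (1 := Hy); apply Rmin_r.
replace y with (x + (y - x)) at 1 by ring.
apply Hd'. intro H0; apply Hyx; lra.
apply Rlt_le_trans with (1 := Hy); apply Rmin_l.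
Qed.

Lemma cont_transfer (D : R -> Prop) (g g' : R -> R) (x r : R) : 0 < r -> D x ->
  (forall y, D y -> Rabs (y - x) < r -> g y = g' y) ->
  continuity_pt g' x ->
  filterlim g (within D (locally x)) (locally (g x)).
Proof.
intros Hr Dx He Hc. apply within_iff.
rewrite (He x Dx) by (rewrite Rminus_diag, Rabs_R0; auto).
apply limw_ext with (g := g') (r := r); auto.
intros y Dy Hy; symmetry; auto. apply limw_cont; auto.
Qed.

Lemma der_interior (D : R -> Prop) (g : R -> R) (dg x r : R) : 0 < r ->
  (forall y, Rabs (y - x) < r -> D y) ->
  filterlim (fun y => (g y - g x) / (y - x))
      (within (fun y => D y /\ y <> x) (locally x)) (locally dg) ->
  derivable_pt_lim g x dg.
Proof.
intros Hr HD H. apply within_iff in H.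
intros eps Heps. destruct (H eps Heps) as [d [Hd H']].
exists (mkposreal (Rmin d r) (Rmin_pos _ _ Hd Hr)). simpl.
intros h Hh Hhr.
replace h with ((x + h) - x) at 2 by ring.
apply H'.
- split. apply HD. replace (x + h - x) with h by ring.
  apply Rlt_le_trans with (1 := Hhr); apply Rmin_r.
  intro E. apply Hh. lra.
- replace (x + h - x) with h by ring.
  apply Rlt_le_trans with (1 := Hhr); apply Rmin_l.
Qed.

Lemma der_cont (D : R -> Prop) (g : R -> R) (dg x : R) : D x ->
  filterlim (fun y => (g y - g x) / (y - x))
      (within (fun y => D y /\ y <> x) (locally x)) (locally dg) ->
  limw D g x (g x).
Proof.
intros Dx H. apply within_iff in H.
destruct (H 1 Rlt_0_1) as [d [Hd H']].
intros eps Heps.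
exists (Rmin d (eps / (Rabs dg + 1))). split.
apply Rmin_pos; auto. apply Rdiv_lt_0_compat; auto. pose proof (Rabs_pos dg); lra.
intros y Dy Hy.
destruct (Req_dec y x) as [E|E].
{ subst. rewrite Rminus_diag, Rabs_R0. auto. }
assert (Hq : Rabs ((g y - g x) / (y - x) - dg) < 1).
{ apply H'. split; auto. apply Rlt_le_trans with (1 := Hy); apply Rmin_l. }
assert (Hyx : y - x <> 0) by lra.
replace (g y - g x) with ((g y - g x) / (y - x) * (y - x)) by (field; auto).
rewrite Rabs_mult.
assert (Hq2 : Rabs ((g y - g x) / (y - x)) <= Rabs dg + 1).
{ replace ((g y - g x) / (y - x)) with (((g y - g x) / (y - x) - dg) + dg) by ring.
  eapply Rle_trans. apply Rabs_triang. lra. }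
assert (Hy2 : Rabs (y - x) < eps / (Rabs dg + 1)).
{ apply Rlt_le_trans with (1 := Hy); apply Rmin_r. }
pose proof (Rabs_pos dg).
apply Rle_lt_trans with ((Rabs dg + 1) * Rabs (y - x)).
apply Rmult_le_compat_r; auto. apply Rabs_pos.
apply Rmult_lt_reg_l with (/ (Rabs dg + 1)). apply Rinv_0_lt_compat; lra.
rewrite <- Rmult_assoc, Rinv_l, Rmult_1_l by lra.
unfold Rdiv in Hy2. rewrite Rmult_comm. exact Hy2.
Qed.

Definition accum (D : R -> Prop) (x : R) := forall d, 0 < d -> exists y, D y /\ Rabs (y - x) < d.

Lemma limw_unique (D : R -> Prop) (g : R -> R) (x L1 L2 : R) :
  accum D x -> limw D g x L1 -> limw D g x L2 -> L1 = L2.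
Proof.
intros Ha H1 H2. apply NNPP; intro Hne.
set (e := Rabs (L1 - L2) / 2).
assert (He : 0 < e). { unfold e. apply Rdiv_lt_0_compat; [apply Rabs_pos_lt; lra | lra]. }
destruct (H1 e He) as [d1 [Hd1 H1']]. destruct (H2 e He) as [d2 [Hd2 H2']].
destruct (Ha (Rmin d1 d2) (Rmin_pos _ _ Hd1 Hd2)) as [y [Dy Hy]].
assert (A1 := H1' y Dy (Rlt_le_trans _ _ _ Hy (Rmin_l _ _))).
assert (A2 := H2' y Dy (Rlt_le_trans _ _ _ Hy (Rmin_r _ _))).
assert (Rabs (L1 - L2) <= Rabs (g y - L2) + Rabs (g y - L1)).
{ replace (L1 - L2) with ((g y - L2) - (g y - L1)) by ring.
  eapply Rle_trans. apply Rabs_triang. rewrite Rabs_Ropp. lra. }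
unfold e in *. lra.
Qed.

Lemma limw_le (D : R -> Prop) (g : R -> R) (x L C : R) :
  accum D x -> limw D g x L -> (forall y, D y -> g y <= C) -> L <= C.
Proof.
intros Ha H HC. apply Rnot_lt_le; intro Hlt.
destruct (H (L - C) ltac:(lra)) as [d [Hd H']].
destruct (Ha d Hd) as [y [Dy Hy]].
specialize (H' y Dy Hy). specialize (HC y Dy).
apply Rabs_def2 in H'. lra.
Qed.

Lemma limw_ge (D : R -> Prop) (g : R -> R) (x L C : R) :
  accum D x -> limw D g x L -> (forall y, D y -> C <= g y) -> C <= L.
Proof.
intros Ha H HC. apply Rnot_lt_le; intro Hlt.
destruct (H (C - L) ltac:(lra)) as [d [Hd H']].
destruct (Ha d Hd) as [y [Dy Hy]].
specialize (H' y Dy Hy). specialize (HC y Dy).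
apply Rabs_def2 in H'. lra.
Qed.

Lemma limw_abs_le (D : R -> Prop) (g : R -> R) (x L C : R) :
  accum D x -> limw D g x L -> (forall y, D y -> Rabs (g y) <= C) -> Rabs L <= C.
Proof.
intros Ha H HC. apply Rabs_le. split.
- apply limw_ge with D g x; auto. intros y Dy. specialize (HC y Dy). apply Rabs_le_between in HC. lra.
- apply limw_le with D g x; auto. intros y Dy. specialize (HC y Dy). apply Rabs_le_between in HC. lra.
Qed.

Lemma accum_right (a b : R) : a < b -> accum (fun y => a < y < b) a.
Proof.
intros Hab d Hd. exists (a + Rmin d (b - a) / 2). split.
- pose proof (Rmin_pos d (b - a) Hd ltac:(lra)). pose proof (Rmin_r d (b - a)). lra.
- pose proof (Rmin_pos d (b - a) Hd ltac:(lra)). pose proof (Rmin_l d (b - a)).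
  rewrite Rabs_right; lra.
Qed.

Lemma accum_left (a b : R) : a < b -> accum (fun y => a < y < b) b.
Proof.
intros Hab d Hd. exists (b - Rmin d (b - a) / 2). split.
- pose proof (Rmin_pos d (b - a) Hd ltac:(lra)). pose proof (Rmin_r d (b - a)). lra.
- pose proof (Rmin_pos d (b - a) Hd ltac:(lra)). pose proof (Rmin_l d (b - a)).
  rewrite Rabs_left; lra.
Qed.

Lemma const_interior (w : R -> R) (a b : R) :
  (forall x, a < x < b -> derivable_pt_lim w x 0) ->
  forall x y, a < x < b -> a < y < b -> w x = w y.
Proof.
intros Hd.
assert (K : forall x y, a < x < b -> a < y < b -> x <= y -> w x = w y).
{ intros x y Hx Hy Hxy.
  destruct (MVT_gen w x y (fun _ => 0)) as [c [_ Hc]].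
  - intros z Hz. apply is_derive_Reals. apply Hd.
    rewrite Rmin_left in Hz by lra. rewrite Rmax_right in Hz by lra. lra.
  - intros z Hz. rewrite Rmin_left in Hz by lra. rewrite Rmax_right in Hz by lra.
    apply derivable_continuous_pt. exists 0. apply Hd. lra.
  - lra. }
intros x y Hx Hy. destruct (Rle_dec x y). auto. symmetry; apply K; auto; lra.
Qed.

Lemma const_end_left (w : R -> R) (a b : R) : a < b ->
  (forall x, a < x < b -> derivable_pt_lim w x 0) ->
  limw (fun y => a < y < b) w a (w a) ->
  forall x, a < x < b -> w a = w x.
Proof.
intros Hab Hd Hl x Hx. apply limw_unique with (fun y => a < y < b) w a; auto.
apply accum_right; auto.
intros eps He. exists 1. split. lra. intros y Dy _.
rewrite (const_interior w a b Hd y x Dy Hx). rewrite Rminus_diag, Rabs_R0. auto.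
Qed.

Lemma const_end_right (w : R -> R) (a b : R) : a < b ->
  (forall x, a < x < b -> derivable_pt_lim w x 0) ->
  limw (fun y => a < y < b) w b (w b) ->
  forall x, a < x < b -> w b = w x.
Proof.
intros Hab Hd Hl x Hx. apply limw_unique with (fun y => a < y < b) w b; auto.
apply accum_left; auto.
intros eps He. exists 1. split. lra. intros y Dy _.
rewrite (const_interior w a b Hd y x Dy Hx). rewrite Rminus_diag, Rabs_R0. auto.
Qed.

Lemma retract_cont (D : R -> Prop) (r g : R -> R) :
  (forall z, D (r z)) -> (forall y z, Rabs (r y - r z) <= Rabs (y - z)) ->
  (forall x, D x -> limw D g x (g x)) ->
  forall z, continuity_pt (fun t => g (r t)) z.
Proof.
intros HD HL Hc z. apply cont_iff. intros eps He.
destruct (Hc (r z) (HD z) eps He) as [d [Hd H']].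
exists d; split; auto. intros y _ Hy. apply H'. apply HD.
eapply Rle_lt_trans. apply HL. auto.
Qed.

Definition mx0 (z : R) := Rmax 0 z.
Definition clamp (a c z : R) := Rmax a (Rmin c z).

Lemma mx0_lip y z : Rabs (mx0 y - mx0 z) <= Rabs (y - z).
Proof.
unfold mx0, Rmax. destruct (Rle_dec 0 y), (Rle_dec 0 z);
 unfold Rabs; repeat destruct Rcase_abs; lra.
Qed.

Lemma clamp_lip a c y z : a <= c -> Rabs (clamp a c y - clamp a c z) <= Rabs (y - z).
Proof.
intros Hac. unfold clamp, Rmax, Rmin.
repeat destruct Rle_dec; unfold Rabs; repeat destruct Rcase_abs; lra.
Qed.

Lemma clamp_in a c z : a <= c -> a <= clamp a c z <= c.
Proof. intros. unfold clamp, Rmax, Rmin. repeat destruct Rle_dec; lra. Qed.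

Lemma clamp_id a c z : a <= z <= c -> clamp a c z = z.
Proof. intros. unfold clamp, Rmax, Rmin. repeat destruct Rle_dec; lra. Qed.

Lemma mx0_id z : 0 <= z -> mx0 z = z.
Proof. intros. unfold mx0, Rmax. destruct Rle_dec; lra. Qed.

Lemma mx0_ge z : 0 <= mx0 z.
Proof. unfold mx0, Rmax. destruct Rle_dec; lra. Qed.

Lemma cont_exRInt (f : R -> R) a b : (forall z, continuity_pt f z) -> ex_RInt f a b.
Proof.
intros H. apply (ex_RInt_continuous (V := R_CompleteNormedModule)). intros z _. apply continuity_pt_filterlim. auto.
Qed.

Lemma RInt_der (f : R -> R) a x : (forall z, continuity_pt f z) ->
  derivable_pt_lim (fun y => RInt f a y) x (f x).
Proof.
intros H. apply is_derive_Reals. apply (is_derive_RInt f (fun y => RInt f a y) a x).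
apply filter_forall. intros y. apply (RInt_correct (V := R_CompleteNormedModule)). apply cont_exRInt; auto.
apply continuity_pt_filterlim. auto.
Qed.

Lemma RInt_der' (f : R -> R) b x : (forall z, continuity_pt f z) ->
  derivable_pt_lim (fun y => RInt f y b) x (- f x).
Proof.
intros H. apply is_derive_Reals.
apply (is_derive_RInt' f (fun y => RInt f y b) x b).
apply filter_forall. intros y. apply (RInt_correct (V := R_CompleteNormedModule)). apply cont_exRInt; auto.
apply continuity_pt_filterlim. auto.
Qed.

Lemma cont_sq (g : R -> R) z : continuity_pt g z -> continuity_pt (fun t => (g t)^2) z.
Proof.
intros H. change (continuity_pt (fun t => g t * (g t * 1)) z).
apply continuity_pt_mult; auto. apply continuity_pt_mult; auto. apply continuity_pt_const.
intros a b; auto.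
Qed.

Lemma cont_exp_comp (g : R -> R) z : continuity_pt g z -> continuity_pt (fun t => exp (g t)) z.
Proof.
intros H. apply (continuity_pt_comp g exp z H).
apply derivable_continuous_pt. apply derivable_pt_exp.
Qed.

Lemma exp_le x y : x <= y -> exp x <= exp y.
Proof. intros [H|H]. left; apply exp_increasing; auto. subst; lra. Qed.

Definition edge_ok (s0 B : R) (s b : R -> R) : Prop :=
  0 < s0 /\ (forall x, 0 <= x -> limw (fun y => 0 <= y) s x (s x)) /\
  (forall x, 0 <= x -> limw (fun y => 0 <= y) b x (b x)) /\
  (forall z, 0 <= z -> s0 <= s z /\ Rabs (s z) <= B /\ Rabs (b z) <= B).

Definition pt (s b : R -> R) (z : R) := 2 * b (mx0 z) / (s (mx0 z))^2.
Definition PP (s b : R -> R) (y : R) := RInt (pt s b) 0 y.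
Definition EE (s b : R -> R) (y : R) := exp (- PP s b y).

Section Edge.
Context (s0 B : R) (s b : R -> R) (HE : edge_ok s0 B s b).

Lemma s_pos z : 0 <= z -> 0 < s z.
Proof. destruct HE as [H0 [_ [_ H]]]. intros Hz. destruct (H z Hz). lra. Qed.

Lemma smx_cont z : continuity_pt (fun t => s (mx0 t)) z.
Proof.
destruct HE as [_ [Hs _]]. apply (retract_cont (fun y => 0 <= y)); auto.
apply mx0_ge. apply mx0_lip.
Qed.

Lemma bmx_cont z : continuity_pt (fun t => b (mx0 t)) z.
Proof.
destruct HE as [_ [_ [Hb _]]]. apply (retract_cont (fun y => 0 <= y)); auto.
apply mx0_ge. apply mx0_lip.
Qed.

Lemma pt_cont z : continuity_pt (pt s b) z.
Proof.
unfold pt. apply continuity_pt_div.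
apply continuity_pt_mult. apply continuity_pt_const. intros a c; auto. apply bmx_cont.
apply cont_sq. apply smx_cont.
apply pow_nonzero. apply Rgt_not_eq. apply s_pos. apply mx0_ge.
Qed.

Definition kk := 2 * B / s0 ^ 2.

Lemma pt_bound z : Rabs (pt s b z) <= kk.
Proof.
destruct HE as [H0 [_ [_ H]]]. destruct (H (mx0 z) (mx0_ge z)) as [H1 [H2 H3]].
set (m := mx0 z) in *.
assert (Hs2 : s0 ^ 2 <= (s m) ^ 2) by (apply pow_incr; lra).
assert (Hp : 0 < s0 ^ 2) by (apply pow_lt; lra).
unfold pt, kk. fold m. unfold Rdiv. rewrite Rabs_mult, Rabs_mult, (Rabs_right 2) by lra.
rewrite (Rabs_right (/ _)) by (left; apply Rinv_0_lt_compat; lra).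
apply Rmult_le_compat. pose proof (Rabs_pos (b m)); lra.
left; apply Rinv_0_lt_compat; lra. lra.
apply Rinv_le_contravar; lra.
Qed.

Lemma kk_ge0 : 0 <= kk.
Proof. eapply Rle_trans. apply Rabs_pos. apply (pt_bound 0). Qed.

Lemma PP_der y : derivable_pt_lim (PP s b) y (pt s b y).
Proof. apply RInt_der. apply pt_cont. Qed.

Lemma EE_der y : derivable_pt_lim (EE s b) y (- pt s b y * EE s b y).
Proof.
unfold EE. replace (- pt s b y * exp (- PP s b y)) with (exp (- PP s b y) * (- pt s b y)) by ring.
apply (derivable_pt_lim_comp (fun t => - PP s b t) exp).
apply derivable_pt_lim_opp. apply PP_der. apply derivable_pt_lim_exp.
Qed.

Lemma EE_cont y : continuity_pt (EE s b) y.
Proof. apply derivable_continuous_pt. exists (- pt s b y * EE s b y). apply EE_der. Qed.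

Lemma PP_cont y : continuity_pt (PP s b) y.
Proof. apply derivable_continuous_pt. exists (pt s b y). apply PP_der. Qed.

Lemma EE_pos y : 0 < EE s b y.
Proof. apply exp_pos. Qed.

Lemma PP0 : PP s b 0 = 0.
Proof. unfold PP. rewrite RInt_point. reflexivity. Qed.

Lemma EE0 : EE s b 0 = 1.
Proof. unfold EE. rewrite PP0, Ropp_0, exp_0. reflexivity. Qed.

Lemma intB_eq y : 0 <= y -> intB s b y = PP s b y.
Proof.
intros Hy. unfold intB, PP. apply RInt_ext. intros z Hz.
rewrite Rmin_left in Hz by lra. unfold pt. rewrite mx0_id by lra. reflexivity.
Qed.

Lemma PP_bound y : 0 <= y -> Rabs (PP s b y) <= kk * y.
Proof.
intros Hy. unfold PP. replace (kk * y) with ((y - 0) * kk) by ring.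
apply abs_RInt_le_const; auto. apply cont_exRInt, pt_cont.
intros; apply pt_bound.
Qed.

Lemma EE_bounds y : 0 <= y <= 1 -> exp (- kk) <= EE s b y <= exp kk.
Proof.
intros Hy. pose proof (PP_bound y (proj1 Hy)). pose proof kk_ge0.
apply Rabs_le_between in H.
assert (kk * y <= kk). { rewrite <- (Rmult_1_r kk) at 2. apply Rmult_le_compat_l; lra. }
unfold EE. split; apply exp_le; lra.
Qed.

End Edge.

Lemma limw_mult (D : R -> Prop) (f g : R -> R) (x A C : R) :
  limw D f x A -> limw D g x C -> limw D (fun y => f y * g y) x (A * C).
Proof.
intros H1 H2. apply within_iff in H1. apply within_iff in H2. apply within_iff.
apply (filterlim_comp_2 f g Rmult H1 H2).
exact (filterlim_mult (K := R_AbsRing) A C).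
Qed.

Lemma aux_pm (a c : R) : a + c - a = c.
Proof. ring. Qed.

Definition qq (s b : R -> R) (z : R) := 2 / (s (mx0 z))^2 * exp (PP s b z).
Definition hh (s b fi : R -> R) (z : R) := 2 * fi z / (s z)^2 * exp (intB s b z).
Definition HH (s b fi : R -> R) (y : R) := RInt (hh s b fi) 0 y.
Definition hc (s b fi : R -> R) (y0 z : R) := fi (clamp 0 y0 z) * qq s b z.
Definition Hc (s b fi : R -> R) (y0 y : R) := RInt (hc s b fi y0) 0 y.
Definition Hlim (s b fi : R -> R) (dl : R) :=
  epsilon (inhabits 0) (fun l => filterlim (HH s b fi) (at_left dl) (locally l)).
Definition Gh (s b fi : R -> R) (dl y : R) :=
  if Rlt_dec y dl then HH s b fi y * EE s b y else Hlim s b fi dl * EE s b dl.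
Definition Ghc (s b fi : R -> R) (dl y : R) := Gh s b fi dl (clamp 0 dl y).

Definition f_ok (dl Bf : R) (fi : R -> R) : Prop :=
  (forall x, 0 <= x < dl -> Rabs (fi x) <= Bf) /\ rel_continuous_on (Ico 0 dl) fi.

Section EdgeF.
Context (s0 B : R) (s b : R -> R) (HE : edge_ok s0 B s b).
Context (dl Bf : R) (fi : R -> R) (Hdl : 0 < dl) (HF : f_ok dl Bf fi).

Lemma qq_cont z : continuity_pt (qq s b) z.
Proof.
unfold qq. apply continuity_pt_mult. apply continuity_pt_div.
apply continuity_pt_const. intros a c; auto. apply cont_sq. apply (smx_cont s0 B s b HE).
apply pow_nonzero. apply Rgt_not_eq. apply (s_pos s0 B s b HE). apply mx0_ge.
apply cont_exp_comp. apply (PP_cont s0 B s b HE).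
Qed.

Lemma hc_cont y0 z : 0 <= y0 < dl -> continuity_pt (hc s b fi y0) z.
Proof.
intros Hy0. unfold hc. apply continuity_pt_mult; [|apply qq_cont].
apply (retract_cont (Icc 0 y0) (clamp 0 y0) fi).
- intros t. apply clamp_in. lra.
- intros; apply clamp_lip; lra.
- intros x Hx. destruct HF as [_ Hc]. unfold Icc in Hx.
  assert (Hx' : Ico 0 dl x) by (unfold Ico; lra).
  specialize (Hc x Hx'). apply within_iff in Hc.
  apply limw_sub with (2 := Hc). unfold Icc, Ico; intros; lra.
Qed.

Lemma hc_eq y0 z : 0 <= z <= y0 -> hc s b fi y0 z = hh s b fi z.
Proof.
intros Hz. unfold hc, hh, qq. rewrite clamp_id by lra. rewrite mx0_id by lra.
rewrite (intB_eq s0 B s b HE) by lra. unfold Rdiv. ring.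
Qed.

Lemma Hc_eq y0 y : 0 <= y <= y0 -> Hc s b fi y0 y = HH s b fi y.
Proof.
intros Hy. unfold Hc, HH. apply RInt_ext. intros z Hz.
rewrite Rmin_left in Hz by lra. rewrite Rmax_right in Hz by lra.
apply hc_eq. lra.
Qed.

Lemma Hc_der y0 x : 0 <= y0 < dl -> derivable_pt_lim (Hc s b fi y0) x (hc s b fi y0 x).
Proof. intros. apply RInt_der. intros; apply hc_cont; auto. Qed.

Lemma Hc_cont y0 x : 0 <= y0 < dl -> continuity_pt (Hc s b fi y0) x.
Proof. intros. apply derivable_continuous_pt. eexists. apply Hc_der; auto. Qed.

Definition hm := 2 * Bf / s0 ^ 2 * exp (kk s0 B * dl).

Lemma EE_le y : 0 <= y -> EE s b y <= exp (kk s0 B * y).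
Proof.
intros Hy. pose proof (PP_bound s0 B s b HE y Hy). apply Rabs_le_between in H.
unfold EE. apply exp_le. lra.
Qed.

Lemma EE_ge y : 0 <= y -> exp (- (kk s0 B * y)) <= EE s b y.
Proof.
intros Hy. pose proof (PP_bound s0 B s b HE y Hy). apply Rabs_le_between in H.
unfold EE. apply exp_le. lra.
Qed.

Lemma hh_bound z : 0 <= z < dl -> Rabs (hh s b fi z) <= hm.
Proof.
intros Hz. destruct HE as [H0 [_ [_ Hb]]]. destruct (Hb z (proj1 Hz)) as [H1 _].
destruct HF as [Hf _]. specialize (Hf z Hz).
assert (Hs2 : s0 ^ 2 <= (s z) ^ 2) by (apply pow_incr; lra).
assert (Hp : 0 < s0 ^ 2) by (apply pow_lt; lra).
assert (Hk := kk_ge0 s0 B s b HE).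
unfold hh, hm. rewrite (intB_eq s0 B s b HE) by lra.
unfold Rdiv. rewrite !Rabs_mult, (Rabs_right 2) by lra.
rewrite (Rabs_right (/ _)) by (left; apply Rinv_0_lt_compat; lra).
rewrite (Rabs_right (exp _)) by (left; apply exp_pos).
apply Rmult_le_compat.
- pose proof (Rabs_pos (fi z)). pose proof (Rinv_0_lt_compat ((s z)^2) ltac:(lra)). nra.
- left; apply exp_pos.
- apply Rmult_le_compat. pose proof (Rabs_pos (fi z)); lra.
  left; apply Rinv_0_lt_compat; lra. lra. apply Rinv_le_contravar; lra.
- pose proof (PP_bound s0 B s b HE z (proj1 Hz)). apply Rabs_le_between in H.
  apply exp_le. assert (kk s0 B * z <= kk s0 B * dl) by (apply Rmult_le_compat_l; lra). lra.
Qed.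

Lemma hm_ge0 : 0 <= hm.
Proof. eapply Rle_trans. apply Rabs_pos. apply (hh_bound 0). lra. Qed.


Lemma HH_diff y y' : 0 <= y <= y' -> y' < dl -> Rabs (HH s b fi y' - HH s b fi y) <= hm * (y' - y).
Proof.
intros Hy Hy'.
rewrite <- (Hc_eq y' y) by lra. rewrite <- (Hc_eq y' y') by lra.
unfold Hc.
assert (Hch : RInt (hc s b fi y') 0 y + RInt (hc s b fi y') y y' = RInt (hc s b fi y') 0 y').
{ apply (RInt_Chasles (V := R_CompleteNormedModule)); apply cont_exRInt; intros; apply hc_cont; lra. }
rewrite <- Hch.
rewrite aux_pm.
rewrite Rmult_comm. apply abs_RInt_le_const. lra.
apply cont_exRInt; intros; apply hc_cont; lra.
intros t Ht. rewrite hc_eq by lra. apply hh_bound. lra.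
Qed.

Lemma HH_bound y : 0 <= y < dl -> Rabs (HH s b fi y) <= hm * y.
Proof.
intros Hy. replace (HH s b fi y) with (HH s b fi y - HH s b fi 0).
replace y with (y - 0) at 2 by ring. apply HH_diff; lra.
unfold HH. rewrite RInt_point. unfold zero; simpl. ring.
Qed.

Lemma HH_lim : filterlim (HH s b fi) (at_left dl) (locally (Hlim s b fi dl)).
Proof.
unfold Hlim. apply (epsilon_spec (inhabits 0) (fun l => filterlim (HH s b fi) (at_left dl) (locally l))).
apply (filterlim_locally_cauchy (U := R_CompleteSpace) (F := at_left dl) (HH s b fi)).
intros eps. pose proof hm_ge0.
set (d := Rmin dl (eps / (2 * (hm + 1)))).
assert (Hd : 0 < d). { apply Rmin_pos; auto. apply Rdiv_lt_0_compat. apply cond_pos. lra. }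
exists (fun y => dl - d < y < dl). split.
- exists (mkposreal d Hd). intros y Hy Hlt. simpl in Hy.
  change (Rabs (y - dl) < d) in Hy. apply Rabs_def2 in Hy. lra.
- intros u v Hu Hv. change (Rabs (HH s b fi v - HH s b fi u) < eps).
  assert (d <= dl) by apply Rmin_l.
  assert (d <= eps / (2 * (hm + 1))) by apply Rmin_r.
  assert (Hx : forall u v, dl - d < u < dl -> dl - d < v < dl -> u <= v ->
     Rabs (HH s b fi v - HH s b fi u) < eps).
  { intros u' v' Hu' Hv' Huv. eapply Rle_lt_trans. apply HH_diff; lra.
    apply Rle_lt_trans with ((hm + 1) * d).
    apply Rmult_le_compat; lra.
    apply Rle_lt_trans with ((hm + 1) * (eps / (2 * (hm + 1)))).
    apply Rmult_le_compat_l; lra.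
    replace ((hm + 1) * (eps / (2 * (hm + 1)))) with (eps / 2) by (field; lra).
    pose proof (cond_pos eps). lra. }
  destruct (Rle_dec u v). apply Hx; auto.
  rewrite <- Rabs_Ropp. replace (- (HH s b fi v - HH s b fi u)) with (HH s b fi u - HH s b fi v) by ring.
  apply Hx; auto; lra.
Qed.

Lemma Hlim_bound : Rabs (Hlim s b fi dl) <= hm * dl.
Proof.
apply (limw_abs_le (fun y => 0 < y < dl) (HH s b fi) dl). apply accum_left; auto.
pose proof HH_lim as H. unfold at_left in H. apply within_iff in H.
apply limw_sub with (2 := H). intros; lra.
intros y Hy. eapply Rle_trans. apply HH_bound. lra.
apply Rmult_le_compat_l. apply hm_ge0. lra.
Qed.

Lemma Gh_cont x : Icc 0 dl x -> limw (Icc 0 dl) (Gh s b fi dl) x (Gh s b fi dl x).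
Proof.
intros Hx. unfold Icc in Hx. destruct (Rlt_dec x dl) as [Hlt|Hge].
- set (y0 := (x + dl) / 2).
  apply within_iff. apply (cont_transfer _ _ (fun y => Hc s b fi y0 y * EE s b y) x ((dl - x) / 2)).
  lra. unfold Icc; lra.
  intros y Hy Hyx. unfold Icc in Hy. apply Rabs_def2 in Hyx. unfold Gh.
  destruct (Rlt_dec y dl); [|lra]. rewrite Hc_eq; unfold y0 in *; auto; lra.
  apply continuity_pt_mult. apply Hc_cont. unfold y0; lra. apply (EE_cont s0 B s b HE).
- assert (x = dl) by lra. subst x.
  assert (L : limw (fun y => y < dl) (fun y => HH s b fi y * EE s b y) dl (Hlim s b fi dl * EE s b dl)).
  { apply limw_mult. pose proof HH_lim as H. apply within_iff in H. exact H.
    apply limw_cont. apply (EE_cont s0 B s b HE). }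
  intros eps He. destruct (L eps He) as [d [Hd L']]. exists d. split; auto.
  intros y Hy Hyd. unfold Gh at 2. destruct (Rlt_dec dl dl). lra.
  unfold Gh. destruct (Rlt_dec y dl). apply L'; auto.
  unfold Icc in Hy. assert (y = dl) by lra. subst. rewrite Rminus_diag, Rabs_R0; auto.
Qed.

Lemma Ghc_cont z : continuity_pt (Ghc s b fi dl) z.
Proof.
unfold Ghc. apply (retract_cont (Icc 0 dl) (clamp 0 dl) (Gh s b fi dl)).
- intros t. apply clamp_in. lra.
- intros; apply clamp_lip; lra.
- apply Gh_cont.
Qed.

Lemma Ghc_eq y : 0 <= y <= dl -> Ghc s b fi dl y = Gh s b fi dl y.
Proof. intros. unfold Ghc. rewrite clamp_id; auto. Qed.

Lemma Gh_lt y : y < dl -> Gh s b fi dl y = HH s b fi y * EE s b y.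
Proof. intros. unfold Gh. destruct Rlt_dec; [auto|lra]. Qed.

Lemma Gh0 : Gh s b fi dl 0 = 0.
Proof. rewrite Gh_lt by lra. unfold HH. rewrite RInt_point. unfold zero; simpl. ring. Qed.

Lemma Gh_bound y : 0 <= y <= dl -> Rabs (Gh s b fi dl y) <= hm * dl * exp (kk s0 B * dl).
Proof.
intros Hy. pose proof hm_ge0. pose proof (kk_ge0 s0 B s b HE).
assert (HEb : forall t, 0 <= t <= dl -> Rabs (EE s b t) <= exp (kk s0 B * dl)).
{ intros t Ht. rewrite Rabs_right by (left; apply (EE_pos s0 B s b HE)). eapply Rle_trans. apply EE_le. lra.
  apply exp_le. apply Rmult_le_compat_l; lra. }
unfold Gh. destruct Rlt_dec.
- rewrite Rabs_mult. apply Rmult_le_compat; try apply Rabs_pos.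
  eapply Rle_trans. apply HH_bound; lra. apply Rmult_le_compat_l; lra. apply HEb; lra.
- rewrite Rabs_mult. apply Rmult_le_compat; try apply Rabs_pos.
  apply Hlim_bound. apply HEb; lra.
Qed.

Lemma alpha_eq x : 0 <= x <= dl -> alpha s b dl x = RInt (EE s b) x dl.
Proof.
intros Hx. unfold alpha. apply RInt_ext. intros y Hy.
rewrite Rmin_left in Hy by lra. unfold EE. rewrite (intB_eq s0 B s b HE) by lra. auto.
Qed.

Lemma beta_eq x : 0 <= x <= dl -> beta s b fi dl x = RInt (Ghc s b fi dl) x dl.
Proof.
intros Hx. unfold beta. apply RInt_ext. intros y Hy.
rewrite Rmin_left in Hy by lra. rewrite Rmax_right in Hy by lra.
rewrite Ghc_eq by lra. rewrite Gh_lt by lra. unfold EE, HH.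
rewrite (intB_eq s0 B s b HE) by lra. unfold hh. reflexivity.
Qed.

End EdgeF.

Lemma dpl_eq (f : R -> R) x l l' : derivable_pt_lim f x l -> l = l' -> derivable_pt_lim f x l'.
Proof. intros H E; subst; auto. Qed.
Lemma dpl_plus (f g : R -> R) x a c : derivable_pt_lim f x a -> derivable_pt_lim g x c ->
  derivable_pt_lim (fun y => f y + g y) x (a + c).
Proof. intros. apply (derivable_pt_lim_plus f g x a c); auto. Qed.
Lemma dpl_minus (f g : R -> R) x a c : derivable_pt_lim f x a -> derivable_pt_lim g x c ->
  derivable_pt_lim (fun y => f y - g y) x (a - c).
Proof. intros. apply (derivable_pt_lim_minus f g x a c); auto. Qed.
Lemma dpl_mult (f g : R -> R) x a c : derivable_pt_lim f x a -> derivable_pt_lim g x c ->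
  derivable_pt_lim (fun y => f y * g y) x (a * g x + f x * c).
Proof. intros. apply (derivable_pt_lim_mult f g x a c); auto. Qed.
Lemma dpl_scal (f : R -> R) k x a : derivable_pt_lim f x a ->
  derivable_pt_lim (fun y => k * f y) x (k * a).
Proof. intros. apply (derivable_pt_lim_scal f k x a); auto. Qed.
Lemma dpl_exp (f : R -> R) x a : derivable_pt_lim f x a ->
  derivable_pt_lim (fun y => exp (f y)) x (exp (f x) * a).
Proof. intros. apply (derivable_pt_lim_comp f exp x a (exp (f x))); auto. apply derivable_pt_lim_exp. Qed.

Lemma dpl_loc (g g' : R -> R) x r l : 0 < r ->
  (forall y, Rabs (y - x) < r -> g y = g' y) -> derivable_pt_lim g' x l -> derivable_pt_lim g x l.
Proof.
intros Hr He H eps Heps. destruct (H eps Heps) as [d Hd].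
exists (mkposreal (Rmin d r) (Rmin_pos _ _ (cond_pos d) Hr)). simpl. intros h Hh Hhr.
rewrite (He (x + h)), (He x). apply Hd; auto. apply Rlt_le_trans with (1 := Hhr); apply Rmin_l.
rewrite Rminus_diag, Rabs_R0; auto.
replace (x + h - x) with h by ring. apply Rlt_le_trans with (1 := Hhr); apply Rmin_r.
Qed.

Lemma limw_plus (D : R -> Prop) (f g : R -> R) (x A C : R) :
  limw D f x A -> limw D g x C -> limw D (fun y => f y + g y) x (A + C).
Proof.
intros H1 H2 eps He. destruct (H1 (eps/2) ltac:(lra)) as [d1 [Hd1 H1']].
destruct (H2 (eps/2) ltac:(lra)) as [d2 [Hd2 H2']].
exists (Rmin d1 d2). split. apply Rmin_pos; auto. intros y Dy Hy.
specialize (H1' y Dy (Rlt_le_trans _ _ _ Hy (Rmin_l _ _))).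
specialize (H2' y Dy (Rlt_le_trans _ _ _ Hy (Rmin_r _ _))).
replace (f y + g y - (A + C)) with ((f y - A) + (g y - C)) by ring.
eapply Rle_lt_trans. apply Rabs_triang. lra.
Qed.

Lemma limw_minus (D : R -> Prop) (f g : R -> R) (x A C : R) :
  limw D f x A -> limw D g x C -> limw D (fun y => f y - g y) x (A - C).
Proof.
intros H1 H2 eps He. destruct (H1 (eps/2) ltac:(lra)) as [d1 [Hd1 H1']].
destruct (H2 (eps/2) ltac:(lra)) as [d2 [Hd2 H2']].
exists (Rmin d1 d2). split. apply Rmin_pos; auto. intros y Dy Hy.
specialize (H1' y Dy (Rlt_le_trans _ _ _ Hy (Rmin_l _ _))).
specialize (H2' y Dy (Rlt_le_trans _ _ _ Hy (Rmin_r _ _))).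
replace (f y - g y - (A - C)) with ((f y - A) + - (g y - C)) by ring.
eapply Rle_lt_trans. apply Rabs_triang. rewrite Rabs_Ropp. lra.
Qed.

Definition du_e (s b fi : R -> R) (dl c x : R) := c * EE s b x + Gh s b fi dl x.
Definition d2u_e (s b fi : R -> R) (c x : R) :=
  - c * pt s b x * EE s b x + hh s b fi x * EE s b x - HH s b fi x * pt s b x * EE s b x.

Section Edge2.
Context (s0 B : R) (s b : R -> R) (HE : edge_ok s0 B s b).
Context (dl Bf : R) (fi : R -> R) (Hdl : 0 < dl) (HF : f_ok dl Bf fi).

Lemma pt_eq x : 0 <= x -> pt s b x = 2 * b x / (s x)^2.
Proof. intros. unfold pt. rewrite mx0_id; auto. Qed.

Lemma hh_eq x : 0 <= x -> hh s b fi x = 2 * fi x / (s x)^2 * exp (PP s b x).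
Proof. intros. unfold hh. rewrite (intB_eq s0 B s b HE); auto. Qed.

Lemma EE_eq x : EE s b x = / exp (PP s b x).
Proof. unfold EE. apply exp_Ropp. Qed.

Lemma ex_der_u (u : R -> R) (c : R) :
  (forall x, 0 <= x <= dl -> u x = - c * alpha s b dl x - beta s b fi dl x) ->
  rel_derivative_on (Icc 0 dl) u (du_e s b fi dl c).
Proof.
intros Hu x Hx.
apply (der_transfer _ _ (fun y => - c * RInt (EE s b) y dl - RInt (Ghc s b fi dl) y dl) x 1).
lra. auto.
intros y Hy _. unfold Icc in Hy. rewrite Hu by lra.
rewrite (alpha_eq s0 B s b HE dl Bf fi Hdl HF) by lra.
rewrite (beta_eq s0 B s b HE dl Bf fi Hdl HF) by lra. auto.
eapply dpl_eq. apply dpl_minus. apply dpl_scal. apply RInt_der'. apply (EE_cont s0 B s b HE).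
apply RInt_der'. apply (Ghc_cont s0 B s b HE dl Bf fi Hdl HF).
unfold du_e. rewrite (Ghc_eq s0 B s b HE dl Bf fi Hdl HF) by (unfold Icc in Hx; lra). ring.
Qed.

Lemma ex_cont_du (c : R) : rel_continuous_on (Icc 0 dl) (du_e s b fi dl c).
Proof.
intros x Hx.
apply (cont_transfer _ _ (fun y => c * EE s b y + Ghc s b fi dl y) x 1). lra. auto.
intros y Hy _. unfold du_e. rewrite (Ghc_eq s0 B s b HE dl Bf fi Hdl HF); auto.
apply continuity_pt_plus. apply continuity_pt_mult. apply continuity_pt_const. intros a a'; auto.
apply (EE_cont s0 B s b HE). apply (Ghc_cont s0 B s b HE dl Bf fi Hdl HF).
Qed.

Lemma ex_der_du (c : R) : rel_derivative_on (Ico 0 dl) (du_e s b fi dl c) (d2u_e s b fi c).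
Proof.
intros x Hx. unfold Ico in Hx. set (y0 := (x + dl) / 2).
apply (der_transfer _ _ (fun y => c * EE s b y + Hc s b fi y0 y * EE s b y) x ((dl - x) / 2)).
lra. unfold Ico; lra.
intros y Hy Hyx. unfold Ico in Hy. apply Rabs_def2 in Hyx. unfold du_e.
rewrite (Gh_lt s0 B s b HE dl Bf fi Hdl HF) by lra.
rewrite (Hc_eq s0 B s b HE dl Bf fi Hdl HF) by (unfold y0; lra). auto.
eapply dpl_eq. apply dpl_plus. apply dpl_scal. apply (EE_der s0 B s b HE).
apply dpl_mult. apply (Hc_der s0 B s b HE dl Bf fi Hdl HF). unfold y0; lra.
apply (EE_der s0 B s b HE).
unfold d2u_e. rewrite (hc_eq s0 B s b HE dl Bf fi Hdl HF) by (unfold y0; lra).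
rewrite (Hc_eq s0 B s b HE dl Bf fi Hdl HF) by (unfold y0; lra). ring.
Qed.

Lemma ex_cont_d2u (c : R) : rel_continuous_on (Ico 0 dl) (d2u_e s b fi c).
Proof.
intros x Hx. unfold Ico in Hx. set (y0 := (x + dl) / 2).
apply (cont_transfer _ _ (fun y => - c * pt s b y * EE s b y + hc s b fi y0 y * EE s b y
     - Hc s b fi y0 y * pt s b y * EE s b y) x ((dl - x) / 2)).
lra. unfold Ico; lra.
intros y Hy Hyx. unfold Ico in Hy. apply Rabs_def2 in Hyx. unfold d2u_e.
rewrite (hc_eq s0 B s b HE dl Bf fi Hdl HF) by (unfold y0; lra).
rewrite (Hc_eq s0 B s b HE dl Bf fi Hdl HF) by (unfold y0; lra). auto.
assert (y0r : 0 <= y0 < dl) by (unfold y0; lra).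
pose proof (EE_cont s0 B s b HE x). pose proof (pt_cont s0 B s b HE x).
pose proof (hc_cont s0 B s b HE dl Bf fi Hdl HF y0 x y0r).
pose proof (Hc_cont s0 B s b HE dl Bf fi Hdl HF y0 x y0r).
apply continuity_pt_minus. apply continuity_pt_plus.
apply continuity_pt_mult; auto. apply continuity_pt_mult; auto. apply continuity_pt_const. intros a a'; auto.
apply continuity_pt_mult; auto.
apply continuity_pt_mult; auto. apply continuity_pt_mult; auto.
Qed.

Lemma ex_ode (c x : R) : 0 < x < dl ->
  Lgen s b (du_e s b fi dl c) (d2u_e s b fi c) x = fi x.
Proof.
intros Hx. unfold Lgen, du_e, d2u_e.
rewrite (Gh_lt s0 B s b HE dl Bf fi Hdl HF) by lra.
rewrite pt_eq, hh_eq, EE_eq by lra.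
assert (Hs : s x <> 0) by (apply Rgt_not_eq; apply (s_pos s0 B s b HE); lra).
assert (He : exp (PP s b x) <> 0) by (apply Rgt_not_eq; apply exp_pos).
field. auto.
Qed.

Lemma ex_du0 (c : R) : du_e s b fi dl c 0 = c.
Proof.
unfold du_e. rewrite (EE0 s0 B s b HE), (Gh0 s0 B s b HE dl Bf fi Hdl HF). ring.
Qed.

Lemma rep_sol (u du d2u : R -> R) :
  regular dl u du d2u ->
  (forall x, 0 < x < dl -> Lgen s b du d2u x = fi x) ->
  u dl = 0 ->
  (forall x, 0 <= x < dl -> du x = (du 0 + HH s b fi x) * EE s b x) /\
  (forall x, 0 <= x <= dl -> u x = - du 0 * alpha s b dl x - beta s b fi dl x).
Proof.
intros [Hu [Hduc [Hdu Hd2c]]] Hode Hudl.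
set (c := du 0).
assert (Ddu : forall x, 0 < x < dl -> derivable_pt_lim du x (d2u x)).
{ intros x Hx. apply (der_interior (Ico 0 dl) du (d2u x) x (Rmin x (dl - x))).
  apply Rmin_pos; lra. intros y Hy. apply Rabs_def2 in Hy.
  pose proof (Rmin_l x (dl - x)). pose proof (Rmin_r x (dl - x)). unfold Ico; lra.
  apply Hdu. unfold Ico; lra. }
assert (Du : forall x, 0 < x < dl -> derivable_pt_lim u x (du x)).
{ intros x Hx. apply (der_interior (Icc 0 dl) u (du x) x (Rmin x (dl - x))).
  apply Rmin_pos; lra. intros y Hy. apply Rabs_def2 in Hy.
  pose proof (Rmin_l x (dl - x)). pose proof (Rmin_r x (dl - x)). unfold Icc; lra.
  apply Hu. unfold Icc; lra. }
assert (DHH : forall x, 0 < x < dl -> derivable_pt_lim (HH s b fi) x (hh s b fi x)).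
{ intros x Hx. set (y0 := (x + dl) / 2).
  apply (dpl_loc _ (Hc s b fi y0) x (Rmin x (dl - x) / 2)).
  apply Rdiv_lt_0_compat; [apply Rmin_pos|]; lra.
  intros y Hy. apply Rabs_def2 in Hy.
  pose proof (Rmin_l x (dl - x)). pose proof (Rmin_r x (dl - x)).
  symmetry. apply (Hc_eq s0 B s b HE dl Bf fi Hdl HF). unfold y0; lra.
  rewrite <- (hc_eq s0 B s b HE dl Bf fi Hdl HF y0) by (unfold y0; lra).
  apply (Hc_der s0 B s b HE dl Bf fi Hdl HF). unfold y0; lra. }
set (w := fun y => du y * exp (PP s b y) - HH s b fi y).
assert (Dw : forall x, 0 < x < dl -> derivable_pt_lim w x 0).
{ intros x Hx. unfold w. eapply dpl_eq. apply dpl_minus. apply dpl_mult. apply Ddu; auto.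
  apply dpl_exp. apply (PP_der s0 B s b HE). apply DHH; auto.
  specialize (Hode x Hx). unfold Lgen in Hode.
  rewrite hh_eq by lra. rewrite <- Hode. rewrite pt_eq by lra.
  assert (Hs : s x <> 0) by (apply Rgt_not_eq; apply (s_pos s0 B s b HE); lra).
  field. auto. }
assert (Lw : limw (fun y => 0 < y < dl) w 0 (w 0)).
{ unfold w. apply limw_minus. apply limw_mult.
  - assert (H0 : Icc 0 dl 0) by (unfold Icc; lra). specialize (Hduc 0 H0).
    apply within_iff in Hduc. apply limw_sub with (2 := Hduc). unfold Icc; intros; lra.
  - apply (limw_cont _ (fun y => exp (PP s b y))). apply (cont_exp_comp (PP s b)). apply (PP_cont s0 B s b HE).
  - apply (limw_ext _ (Hc s b fi (dl / 2)) _ _ _ (dl / 2)). lra.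
    intros y Hy Hy2. apply Rabs_def2 in Hy2. apply (Hc_eq s0 B s b HE dl Bf fi Hdl HF); lra.
    rewrite <- (Hc_eq s0 B s b HE dl Bf fi Hdl HF (dl / 2) 0) by lra.
    apply limw_cont. apply (Hc_cont s0 B s b HE dl Bf fi Hdl HF). lra. }
assert (w0 : w 0 = c).
{ unfold w, c. rewrite (PP0 s0 B s b HE), exp_0. unfold HH. rewrite RInt_point. unfold zero; simpl. ring. }
assert (R2 : forall x, 0 <= x < dl -> du x = (c + HH s b fi x) * EE s b x).
{ intros x Hx. destruct (Req_dec x 0) as [E|E].
  - subst x. unfold HH. rewrite RInt_point, (EE0 s0 B s b HE). unfold zero; simpl. unfold c; ring.
  - assert (Hwx : w x = c) by (rewrite <- w0; symmetry; apply (const_end_left w 0 dl); auto; lra).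
    unfold w in Hwx. rewrite EE_eq. rewrite <- Hwx.
    field. apply Rgt_not_eq, exp_pos. }
split. exact R2.
set (phi := fun y => u y + c * RInt (EE s b) y dl + RInt (Ghc s b fi dl) y dl).
assert (Dphi : forall x, 0 < x < dl -> derivable_pt_lim phi x 0).
{ intros x Hx. unfold phi. eapply dpl_eq. apply dpl_plus. apply dpl_plus. apply Du; auto.
  apply dpl_scal. apply RInt_der'. apply (EE_cont s0 B s b HE).
  apply RInt_der'. apply (Ghc_cont s0 B s b HE dl Bf fi Hdl HF).
  rewrite (Ghc_eq s0 B s b HE dl Bf fi Hdl HF) by lra.
  rewrite (Gh_lt s0 B s b HE dl Bf fi Hdl HF) by lra. rewrite R2 by lra. ring. }
assert (Cphi : forall x, Icc 0 dl x -> limw (fun y => 0 < y < dl) phi x (phi x)).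
{ intros x Hx. unfold phi. apply limw_plus. apply limw_plus.
  - specialize (der_cont _ _ _ _ Hx (Hu x Hx)). intros H. apply limw_sub with (2 := H).
    unfold Icc; intros; lra.
  - apply limw_mult. intros e He; exists 1; split; [lra|]. intros; rewrite Rminus_diag, Rabs_R0; auto.
    apply (limw_cont _ (fun y => RInt (EE s b) y dl)). apply derivable_continuous_pt. eexists. apply RInt_der'. apply (EE_cont s0 B s b HE).
  - apply (limw_cont _ (fun y => RInt (Ghc s b fi dl) y dl)). apply derivable_continuous_pt. eexists. apply RInt_der'.
    apply (Ghc_cont s0 B s b HE dl Bf fi Hdl HF). }
assert (phidl : phi dl = 0).
{ unfold phi. rewrite Hudl, !RInt_point. unfold zero; simpl. ring. }
assert (Hm : 0 < dl / 2 < dl) by lra.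
assert (Hphi : forall x, 0 <= x <= dl -> phi x = 0).
{ intros x Hx. rewrite <- phidl.
  rewrite (const_end_right phi 0 dl Hdl Dphi (Cphi dl ltac:(unfold Icc; lra)) (dl / 2) Hm).
  destruct (Req_dec x 0) as [E|E].
  - subst x. rewrite <- (const_end_left phi 0 dl Hdl Dphi (Cphi 0 ltac:(unfold Icc; lra)) (dl / 2) Hm). auto.
  - destruct (Req_dec x dl) as [E'|E'].
    + subst x. apply (const_end_right phi 0 dl Hdl Dphi (Cphi dl ltac:(unfold Icc; lra)) (dl / 2) Hm).
    + apply (const_interior phi 0 dl Dphi); lra. }
intros x Hx. specialize (Hphi x Hx). unfold phi in Hphi.
rewrite (alpha_eq s0 B s b HE dl Bf fi Hdl HF) by lra.
rewrite (beta_eq s0 B s b HE dl Bf fi Hdl HF) by lra. fold c. lra.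
Qed.

Lemma alpha0_pos : 0 < alpha s b dl 0.
Proof.
rewrite (alpha_eq s0 B s b HE dl Bf fi Hdl HF) by lra.
apply RInt_gt_0; auto. intros; apply (EE_pos s0 B s b HE).
intros; apply continuity_pt_filterlim; apply (EE_cont s0 B s b HE).
Qed.

Lemma alpha0_bounds : dl <= 1 ->
  exp (- kk s0 B) * dl <= alpha s b dl 0 <= exp (kk s0 B) * dl.
Proof.
intros H1. rewrite (alpha_eq s0 B s b HE dl Bf fi Hdl HF) by lra.
assert (Hi : ex_RInt (EE s b) 0 dl) by (apply cont_exRInt; apply (EE_cont s0 B s b HE)).
split.
- replace (exp (- kk s0 B) * dl) with (RInt (fun _ => exp (- kk s0 B)) 0 dl).
  apply RInt_le; auto. lra. apply ex_RInt_const.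
  intros y Hy. apply (EE_bounds s0 B s b HE). lra.
  rewrite RInt_const. unfold scal; simpl. unfold mult; simpl. ring.
- replace (exp (kk s0 B) * dl) with (RInt (fun _ => exp (kk s0 B)) 0 dl).
  apply RInt_le; auto. lra. apply ex_RInt_const.
  intros y Hy. apply (EE_bounds s0 B s b HE). lra.
  rewrite RInt_const. unfold scal; simpl. unfold mult; simpl. ring.
Qed.

Lemma beta0_bound : Rabs (beta s b fi dl 0) <= dl * (hm s0 B dl Bf * dl * exp (kk s0 B * dl)).
Proof.
rewrite (beta_eq s0 B s b HE dl Bf fi Hdl HF) by lra.
replace (dl * (hm s0 B dl Bf * dl * exp (kk s0 B * dl))) with ((dl - 0) * (hm s0 B dl Bf * dl * exp (kk s0 B * dl))) by ring.
apply abs_RInt_le_const. lra. apply cont_exRInt. apply (Ghc_cont s0 B s b HE dl Bf fi Hdl HF).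
intros t Ht. rewrite (Ghc_eq s0 B s b HE dl Bf fi Hdl HF) by lra.
apply (Gh_bound s0 B s b HE dl Bf fi Hdl HF). lra.
Qed.

End Edge2.

Lemma sum_lt_ext N (g h : nat -> R) : (forall i, (i < N)%nat -> g i = h i) -> sum_lt N g = sum_lt N h.
Proof. intros H. destruct N as [|n]; simpl; auto. apply sum_eq. intros i Hi; apply H; lia. Qed.

Lemma sum_lt_lin N (g h : nat -> R) x y :
  sum_lt N (fun i => x * g i + y * h i) = x * sum_lt N g + y * sum_lt N h.
Proof.
destruct N as [|n]; simpl. ring.
rewrite sum_plus. rewrite !scal_sum. f_equal; apply sum_eq; intros; ring.
Qed.

Lemma sum_lt_le N (g h : nat -> R) : (forall i, (i < N)%nat -> g i <= h i) -> sum_lt N g <= sum_lt N h.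
Proof. intros H. destruct N as [|n]; simpl. lra. apply sum_Rle. intros i Hi; apply H; lia. Qed.

Lemma sum_lt_abs N (g : nat -> R) : Rabs (sum_lt N g) <= sum_lt N (fun i => Rabs (g i)).
Proof. destruct N as [|n]; simpl. rewrite Rabs_R0; lra. apply sum_f_R0_triangle. Qed.

Lemma sum_lt_pos N (g : nat -> R) : (1 <= N)%nat -> (forall i, (i < N)%nat -> 0 < g i) -> 0 < sum_lt N g.
Proof.
intros HN H. destruct N as [|n]; [lia|]. simpl. clear HN.
induction n. simpl. apply H; lia.
simpl. apply Rplus_lt_0_compat. apply IHn. intros; apply H; lia. apply H; lia.
Qed.

Definition KK N (eta : R) (rho a be : nat -> R) (fv : R) :=
  (eta * fv - sum_lt N (fun j => rho j * (be O - be j) / a j)) * / sum_lt N (fun j => rho j / a j).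

Lemma alg_unique N (eta : R) (rho a be cv : nat -> R) (fv W : R) :
  (1 <= N)%nat -> (forall i, (i < N)%nat -> 0 < rho i) -> (forall i, (i < N)%nat -> 0 < a i) ->
  (forall i, (i < N)%nat -> - cv i * a i - be i = W) ->
  eta * fv = sum_lt N (fun i => rho i * cv i) ->
  forall i, (i < N)%nat -> cv i = (KK N eta rho a be fv + be O - be i) / a i.
Proof.
intros HN Hr Ha Hc Hv i Hi.
set (S := sum_lt N (fun j => rho j / a j)).
set (U := sum_lt N (fun j => rho j * be j / a j)).
assert (HS : 0 < S). { apply sum_lt_pos; auto. intros j Hj. apply Rdiv_lt_0_compat; auto. }
assert (E1 : sum_lt N (fun i => rho i * cv i) = (- W) * S + (-1) * U).
{ unfold S, U. rewrite <- sum_lt_lin. apply sum_lt_ext. intros j Hj.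
  rewrite <- (Hc j Hj). field. apply Rgt_not_eq, Ha; auto. }
assert (E2 : sum_lt N (fun j => rho j * (be O - be j) / a j) = be O * S + (-1) * U).
{ unfold S, U. rewrite <- sum_lt_lin. apply sum_lt_ext. intros j Hj.
  field. apply Rgt_not_eq, Ha; auto. }
unfold KK. fold S. rewrite E2, Hv, E1.
specialize (Hc i Hi). assert (Hai := Ha i Hi).
apply Rmult_eq_reg_r with (a i). 2: lra.
replace (cv i * a i) with (- W - be i) by lra.
field. split; lra.
Qed.

Lemma alg_exist N (eta : R) (rho a be : nat -> R) (fv : R) :
  (1 <= N)%nat -> (forall i, (i < N)%nat -> 0 < rho i) -> (forall i, (i < N)%nat -> 0 < a i) ->
  sum_lt N (fun i => rho i * ((KK N eta rho a be fv + be O - be i) / a i)) = eta * fv.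
Proof.
intros HN Hr Ha.
set (S := sum_lt N (fun j => rho j / a j)).
set (U := sum_lt N (fun j => rho j * be j / a j)).
assert (HS : 0 < S). { apply sum_lt_pos; auto. intros j Hj. apply Rdiv_lt_0_compat; auto. }
assert (E2 : sum_lt N (fun j => rho j * (be O - be j) / a j) = be O * S + (-1) * U).
{ unfold S, U. rewrite <- sum_lt_lin. apply sum_lt_ext. intros j Hj.
  field. apply Rgt_not_eq, Ha; auto. }
assert (E3 : sum_lt N (fun i => rho i * ((KK N eta rho a be fv + be O - be i) / a i))
   = (KK N eta rho a be fv + be O) * S + (-1) * U).
{ unfold S, U. rewrite <- sum_lt_lin. apply sum_lt_ext. intros j Hj.
  field. apply Rgt_not_eq, Ha; auto. }
rewrite E3. unfold KK. fold S. rewrite E2. field. lra.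
Qed.

Lemma Lgen_lim (dl : R) (fi Lg : R -> R) : 0 < dl ->
  rel_continuous_on (Ico 0 dl) fi -> (forall x, 0 < x < dl -> Lg x = fi x) ->
  filterlim Lg (at_right 0) (locally (fi 0)).
Proof.
intros Hdl Hc He. apply within_iff.
assert (H0 : Ico 0 dl 0) by (unfold Ico; lra).
specialize (Hc 0 H0). apply within_iff in Hc.
intros eps Heps. destruct (Hc eps Heps) as [d [Hd H']].
exists (Rmin d dl). split. apply Rmin_pos; auto. intros y Hy Hyd.
pose proof (Rmin_l d dl). pose proof (Rmin_r d dl). apply Rabs_def2 in Hyd as Hyd'.
rewrite He by lra. apply H'. unfold Ico; lra. lra.
Qed.

Lemma sum_lt_scal N (g : nat -> R) x : sum_lt N (fun i => x * g i) = x * sum_lt N g.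
Proof.
rewrite (sum_lt_ext N _ (fun i => x * g i + 0 * g i)). rewrite sum_lt_lin. ring.
intros; ring.
Qed.

Section Main.
Context (N : nat) (eta : R) (rho : nat -> R)
  (sig bb : nat -> R -> R) (sig0 : R)
  (HN : (1 <= N)%nat) (Heta : 0 <= eta)
  (Hrho_pos : forall i, (i < N)%nat -> 0 < rho i)
  (Hrho_sum : sum_lt N rho = 1)
  (Hsig0 : 0 < sig0)
  (Hsig_low : forall i x, (i < N)%nat -> 0 < x -> sig0 < sig i x)
  (Hbdd : exists B, forall i x, (i < N)%nat -> 0 < x ->
            Rabs (sig i x) <= B /\ Rabs (bb i x) <= B)
  (Hsig_cont : forall i, (i < N)%nat -> rel_continuous_on (fun x => 0 <= x) (sig i))
  (Hb_cont : forall i, (i < N)%nat -> rel_continuous_on (fun x => 0 <= x) (bb i)).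

Lemma edges : exists B, forall i, (i < N)%nat -> edge_ok sig0 B (sig i) (bb i).
Proof.
destruct Hbdd as [B HB]. exists B. intros i Hi.
assert (Cs : forall x, 0 <= x -> limw (fun y => 0 <= y) (sig i) x (sig i x)).
{ intros x Hx. apply within_iff. apply Hsig_cont; auto. }
assert (Cb : forall x, 0 <= x -> limw (fun y => 0 <= y) (bb i) x (bb i x)).
{ intros x Hx. apply within_iff. apply Hb_cont; auto. }
split; [auto|split; [auto|split; [auto|]]].
intros z Hz. destruct (Req_dec z 0) as [E|E].
- subst z. assert (Ha := accum_right 0 1 Rlt_0_1).
  assert (Ls : limw (fun y => 0 < y < 1) (sig i) 0 (sig i 0)).
  { apply limw_sub with (2 := Cs 0 (Rle_refl 0)). intros y Hy; cbv beta in *; lra. }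
  assert (Lb : limw (fun y => 0 < y < 1) (bb i) 0 (bb i 0)).
  { apply limw_sub with (2 := Cb 0 (Rle_refl 0)). intros y Hy; cbv beta in *; lra. }
  split; [|split].
  + apply (limw_ge _ _ _ _ _ Ha Ls). intros y Hy; cbv beta in Hy. left; apply Hsig_low; auto; lra.
  + apply (limw_abs_le _ _ _ _ _ Ha Ls). intros y Hy; cbv beta in Hy. apply HB; auto; lra.
  + apply (limw_abs_le _ _ _ _ _ Ha Lb). intros y Hy; cbv beta in Hy. apply HB; auto; lra.
- split. left; apply Hsig_low; auto; lra. apply HB; auto; lra.
Qed.

Lemma fok_of (dl : R) (f : nat -> R -> R) : admissible_f N dl f ->
  forall i, (i < N)%nat -> exists Bf, f_ok dl Bf (f i).
Proof.
intros [H _] i Hi. destruct (H i Hi) as [[Bf HBf] Hc]. exists Bf. split; auto.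
Qed.

Lemma part1 : forall (delta : R) (f : nat -> R -> R),
     0 < delta -> admissible_f N delta f ->
     (exists du d2u : nat -> R -> R,
        solves N eta rho sig bb delta f (usol N eta rho sig bb delta f) du d2u) /\
     (forall u du d2u : nat -> R -> R,
        solves N eta rho sig bb delta f u du d2u ->
        forall i x, (i < N)%nat -> 0 <= x <= delta ->
          u i x = usol N eta rho sig bb delta f i x).
Proof.
intros dl f Hdl Hadm.
destruct edges as [B HB].
pose proof (fok_of dl f Hadm) as Hfok.
set (a := fun j => alpha (sig j) (bb j) dl 0).
set (be := fun j => beta (sig j) (bb j) (f j) dl 0).
assert (Ha : forall j, (j < N)%nat -> 0 < a j).
{ intros j Hj. destruct (Hfok j Hj) as [Bf HF]. unfold a.
  apply (alpha0_pos sig0 B (sig j) (bb j) (HB j Hj) dl Bf (f j) Hdl HF). }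
assert (Hkap : forall j, kappa N eta rho sig bb dl f j = KK N eta rho a be (f O 0) + be O - be j).
{ intros j. reflexivity. }
set (cc := fun j => kappa N eta rho sig bb dl f j / a j).
split.
- exists (fun i => du_e (sig i) (bb i) (f i) dl (cc i)), (fun i => d2u_e (sig i) (bb i) (f i) (cc i)).
  split; [|split; [|split; [|split]]].
  + intros i Hi. destruct (Hfok i Hi) as [Bf HF]. pose proof (HB i Hi) as HE.
    split; [|split; [|split]].
    * apply (ex_der_u sig0 B (sig i) (bb i) HE dl Bf (f i) Hdl HF).
      intros x Hx. unfold usol, cc, a. unfold Rdiv; ring.
    * apply (ex_cont_du sig0 B (sig i) (bb i) HE dl Bf (f i) Hdl HF).
    * apply (ex_der_du sig0 B (sig i) (bb i) HE dl Bf (f i) Hdl HF).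
    * apply (ex_cont_d2u sig0 B (sig i) (bb i) HE dl Bf (f i) Hdl HF).
  + intros i x Hi Hx. destruct (Hfok i Hi) as [Bf HF].
    apply (ex_ode sig0 B (sig i) (bb i) (HB i Hi) dl Bf (f i) Hdl HF). auto.
  + exists (f O 0). split.
    * intros i Hi. destruct (Hfok i Hi) as [Bf HF].
      destruct Hadm as [_ Hf0]. rewrite (Hf0 O i) by lia.
      apply (Lgen_lim dl); auto. apply HF.
      intros x Hx. apply (ex_ode sig0 B (sig i) (bb i) (HB i Hi) dl Bf (f i) Hdl HF). auto.
    * rewrite (sum_lt_ext _ _ (fun i => rho i * ((KK N eta rho a be (f O 0) + be O - be i) / a i))).
      rewrite alg_exist; auto. ring.
      intros i Hi. destruct (Hfok i Hi) as [Bf HF].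
      rewrite (ex_du0 sig0 B (sig i) (bb i) (HB i Hi) dl Bf (f i) Hdl HF).
      unfold cc. rewrite Hkap. reflexivity.
  + intros i Hi. unfold usol, alpha, beta. rewrite !RInt_point. unfold zero; simpl. unfold Rdiv; ring.
  + intros i j Hi Hj. unfold usol. rewrite !Hkap. fold (a i) (a j) (be i) (be j).
    assert (Hai := Ha i Hi). assert (Haj := Ha j Hj). field. split; lra.
- intros u du d2u [Hreg [Hode [[Lv [HLv Hvert]] [Hudl Hcont]]]] i x Hi Hx.
  assert (Hrep : forall j, (j < N)%nat ->
     (forall x, 0 <= x < dl -> du j x = (du j 0 + HH (sig j) (bb j) (f j) x) * EE (sig j) (bb j) x) /\
     (forall x, 0 <= x <= dl -> u j x = - du j 0 * alpha (sig j) (bb j) dl x - beta (sig j) (bb j) (f j) dl x)).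
  { intros j Hj. destruct (Hfok j Hj) as [Bf HF].
    apply (rep_sol sig0 B (sig j) (bb j) (HB j Hj) dl Bf (f j) Hdl HF (u j) (du j) (d2u j)); auto. }
  assert (HLv0 : Lv = f O 0).
  { destruct (Hfok O ltac:(lia)) as [Bf HF].
    assert (L1 := HLv O ltac:(lia)). apply within_iff in L1.
    assert (L2 := Lgen_lim dl (f O) _ Hdl (proj2 HF) (fun x Hx => Hode O x ltac:(lia) Hx)).
    apply within_iff in L2.
    apply (limw_unique (fun y => 0 < y < dl) (Lgen (sig O) (bb O) (du O) (d2u O)) 0).
    apply accum_right; auto.
    apply limw_sub with (2 := L1). intros; lra.
    apply limw_sub with (2 := L2). intros; lra. }
  assert (Hcv := alg_unique N eta rho a be (fun j => du j 0) (f O 0) (u O 0) HN Hrho_pos Ha).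
  rewrite (proj2 (Hrep i Hi) x Hx). rewrite Hcv; auto.
  + unfold usol. rewrite Hkap. unfold a. unfold Rdiv. ring.
  + intros j Hj. rewrite (Hcont O j) by lia. rewrite (proj2 (Hrep j Hj) 0) by lra. reflexivity.
  + rewrite <- HLv0. lra.
Qed.


Lemma part2 : forall M : R, exists C delta0 : R, 0 < delta0 /\
     forall (delta : R) (f : nat -> R -> R),
       0 < delta < delta0 -> admissible_f N delta f ->
       (forall i x, (i < N)%nat -> 0 <= x < delta -> Rabs (f i x) <= M) ->
       forall u du d2u : nat -> R -> R,
         solves N eta rho sig bb delta f u du d2u ->
         forall i x, (i < N)%nat -> 0 <= x < delta -> Rabs (d2u i x) <= C.
Proof.
intros M. destruct edges as [B HB].
set (k := kk sig0 B). set (m := exp (- k)). set (Mx := exp k).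
set (hM := 2 * M / sig0 ^ 2 * exp k).
set (Q := eta * M + hM * Mx / m).
set (Cc := (Q * Mx + hM * Mx) / m).
set (Cd := (Cc + hM) * Mx).
set (C := 2 * (M + B * Cd) / sig0 ^ 2).
exists C, 1. split; [lra|].
intros dl f Hdl Hadm Hfb u du d2u [Hreg [Hode [[Lv [HLv Hvert]] [Hudl Hcont]]]] i x Hi Hx.
assert (HE0 := HB O ltac:(lia)).
assert (Hk : 0 <= k) by (apply (kk_ge0 sig0 B (sig O) (bb O) HE0)).
assert (HM : 0 <= M) by (eapply Rle_trans; [apply Rabs_pos| apply (Hfb O 0%R); [lia|lra]]).
assert (HB0 : 0 <= B).
{ destruct HE0 as [_ [_ [_ Hb]]]. destruct (Hb 0 (Rle_refl 0)) as [_ [H _]].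
  eapply Rle_trans; [apply Rabs_pos| apply H]. }
assert (Hm : 0 < m) by apply exp_pos. assert (HMx : 0 < Mx) by apply exp_pos.
assert (Hs2 : 0 < sig0 ^ 2) by (apply pow_lt; lra).
assert (HhM : 0 <= hM).
{ unfold hM. apply Rmult_le_pos. apply Rmult_le_pos. lra. left; apply Rinv_0_lt_compat; lra.
  left; apply exp_pos. }
assert (Hfok : forall j, (j < N)%nat -> f_ok dl M (f j)).
{ intros j Hj. split. intros; apply Hfb; auto. destruct Hadm as [Ha _]. apply (Ha j Hj). }
assert (Hhm : hm sig0 B dl M <= hM).
{ unfold hm, hM. apply Rmult_le_compat_l.
  apply Rmult_le_pos. lra. left; apply Rinv_0_lt_compat; lra.
  apply exp_le. fold k. assert (k * dl <= k * 1) by (apply Rmult_le_compat_l; lra). lra. }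
assert (Hrep : forall j, (j < N)%nat ->
   (forall x, 0 <= x < dl -> du j x = (du j 0 + HH (sig j) (bb j) (f j) x) * EE (sig j) (bb j) x) /\
   (forall x, 0 <= x <= dl -> u j x = - du j 0 * alpha (sig j) (bb j) dl x - beta (sig j) (bb j) (f j) dl x)).
{ intros j Hj.
  apply (rep_sol sig0 B (sig j) (bb j) (HB j Hj) dl M (f j) (proj1 Hdl) (Hfok j Hj) (u j) (du j) (d2u j)); auto. }
assert (HLv0 : Lv = f O 0).
{ assert (L1 := HLv O ltac:(lia)). apply within_iff in L1.
  assert (L2 := Lgen_lim dl (f O) _ (proj1 Hdl) (proj2 (Hfok O ltac:(lia))) (fun x Hx => Hode O x ltac:(lia) Hx)).
  apply within_iff in L2.
  apply (limw_unique (fun y => 0 < y < dl) (Lgen (sig O) (bb O) (du O) (d2u O)) 0).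
  apply accum_right; lra.
  apply limw_sub with (2 := L1). intros; lra.
  apply limw_sub with (2 := L2). intros; lra. }
set (a := fun j => alpha (sig j) (bb j) dl 0).
set (be := fun j => beta (sig j) (bb j) (f j) dl 0).
set (W := u O 0).
assert (Ha : forall j, (j < N)%nat -> m * dl <= a j <= Mx * dl).
{ intros j Hj. apply (alpha0_bounds sig0 B (sig j) (bb j) (HB j Hj) dl M (f j) (proj1 Hdl) (Hfok j Hj)). lra. }
assert (Hapos : forall j, (j < N)%nat -> 0 < a j).
{ intros j Hj. specialize (Ha j Hj). nra. }
assert (Hbe : forall j, (j < N)%nat -> Rabs (be j) <= dl * dl * hM * Mx).
{ intros j Hj. eapply Rle_trans.
  apply (beta0_bound sig0 B (sig j) (bb j) (HB j Hj) dl M (f j) (proj1 Hdl) (Hfok j Hj)).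
  assert (exp (kk sig0 B * dl) <= Mx).
  { apply exp_le. fold k. assert (k * dl <= k * 1) by (apply Rmult_le_compat_l; lra). lra. }
  assert (0 <= hm sig0 B dl M) by (apply (hm_ge0 sig0 B (sig j) (bb j) (HB j Hj) dl M (f j) (proj1 Hdl) (Hfok j Hj))).
  assert (0 <= exp (kk sig0 B * dl)) by (left; apply exp_pos).
  assert (hm sig0 B dl M * exp (kk sig0 B * dl) <= hM * Mx) by (apply Rmult_le_compat; lra).
  replace (dl * (hm sig0 B dl M * dl * exp (kk sig0 B * dl))) with (dl * dl * (hm sig0 B dl M * exp (kk sig0 B * dl))) by ring.
  replace (dl * dl * hM * Mx) with (dl * dl * (hM * Mx)) by ring.
  apply Rmult_le_compat_l. nra. auto. }
assert (Hw : forall j, (j < N)%nat -> - du j 0 * a j - be j = W).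
{ intros j Hj. unfold W. rewrite (Hcont O j) by lia. rewrite (proj2 (Hrep j Hj) 0) by lra. reflexivity. }
assert (Hv : eta * f O 0 = sum_lt N (fun j => rho j * du j 0)) by (rewrite <- HLv0; lra).
set (S := sum_lt N (fun j => rho j / a j)).
set (U := sum_lt N (fun j => rho j * be j / a j)).
assert (E1 : sum_lt N (fun j => rho j * du j 0) = (- W) * S + (-1) * U).
{ unfold S, U. rewrite <- sum_lt_lin. apply sum_lt_ext. intros j Hj.
  rewrite <- (Hw j Hj). field. apply Rgt_not_eq, Hapos; auto. }
assert (HS : / (Mx * dl) <= S).
{ unfold S. replace (/ (Mx * dl)) with (/ (Mx * dl) * sum_lt N rho) by (rewrite Hrho_sum; ring).
  rewrite <- sum_lt_scal. apply sum_lt_le. intros j Hj.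
  specialize (Ha j Hj). specialize (Hrho_pos j Hj). unfold Rdiv.
  rewrite Rmult_comm. apply Rmult_le_compat_l. lra. apply Rinv_le_contravar. nra. lra. }
assert (HU : Rabs U <= dl * hM * Mx / m).
{ unfold U. eapply Rle_trans. apply sum_lt_abs.
  replace (dl * hM * Mx / m) with ((dl * hM * Mx / m) * sum_lt N rho) by (rewrite Hrho_sum; ring).
  rewrite <- sum_lt_scal. apply sum_lt_le. intros j Hj.
  specialize (Ha j Hj). specialize (Hrho_pos j Hj). specialize (Hbe j Hj). specialize (Hapos j Hj).
  unfold Rdiv. rewrite !Rabs_mult. rewrite (Rabs_right (rho j)) by lra.
  rewrite (Rabs_right (/ a j)) by (left; apply Rinv_0_lt_compat; lra).
  replace (dl * hM * Mx * / m * rho j) with (rho j * ((dl * dl * hM * Mx) * / (m * dl))) by (field; lra).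
  rewrite Rmult_assoc. apply Rmult_le_compat_l. lra.
  apply Rmult_le_compat. apply Rabs_pos. left; apply Rinv_0_lt_compat; lra. auto.
  apply Rinv_le_contravar. nra. lra. }
assert (HWS : Rabs W * S <= Q).
{ assert (W * S = - (eta * f O 0) - U) by (rewrite Hv, E1; ring).
  assert (HSp : 0 < S) by (eapply Rlt_le_trans; [|apply HS]; apply Rinv_0_lt_compat; nra).
  replace (Rabs W * S) with (Rabs (W * S)) by (rewrite Rabs_mult, (Rabs_right S); lra).
  rewrite H. unfold Q.
  replace (- (eta * f O 0) - U) with (- (eta * f O 0 + U)) by ring. rewrite Rabs_Ropp.
  eapply Rle_trans. apply Rabs_triang. apply Rplus_le_compat.
  rewrite Rabs_mult, (Rabs_right eta) by lra. apply Rmult_le_compat_l. lra. apply Hfb; [lia|lra].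
  eapply Rle_trans. apply HU. unfold Rdiv. rewrite !Rmult_assoc. rewrite <- (Rmult_1_l (hM * (Mx * / m))) at 2.
  apply Rmult_le_compat_r. apply Rmult_le_pos. lra. apply Rmult_le_pos. lra. left; apply Rinv_0_lt_compat; lra. lra. }
assert (HQ : 0 <= Q).
{ unfold Q. apply Rplus_le_le_0_compat. nra. unfold Rdiv. apply Rmult_le_pos. nra. left; apply Rinv_0_lt_compat; lra. }
assert (HW : Rabs W <= Q * Mx * dl).
{ assert (HMd : 0 < Mx * dl) by nra.
  assert (Rabs W * / (Mx * dl) <= Q).
  { eapply Rle_trans; [|apply HWS]. apply Rmult_le_compat_l. apply Rabs_pos. auto. }
  apply Rmult_le_reg_r with (/ (Mx * dl)). apply Rinv_0_lt_compat; auto.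
  replace (Q * Mx * dl * / (Mx * dl)) with Q by (field; lra). auto. }
assert (Hc : Rabs (du i 0) <= Cc).
{ specialize (Hw i Hi). specialize (Ha i Hi). specialize (Hbe i Hi).
  assert (du i 0 * a i = - (W + be i)) by lra.
  assert (Rabs (du i 0) * a i <= dl * (Q * Mx + hM * Mx)).
  { replace (Rabs (du i 0) * a i) with (Rabs (du i 0 * a i)) by (rewrite Rabs_mult, (Rabs_right (a i)); nra).
    rewrite H, Rabs_Ropp. eapply Rle_trans. apply Rabs_triang.
    assert (dl * dl * hM * Mx <= dl * hM * Mx).
    { replace (dl * dl * hM * Mx) with (dl * (dl * (hM * Mx))) by ring.
      replace (dl * hM * Mx) with (dl * (1 * (hM * Mx))) by ring.
      apply Rmult_le_compat_l. lra. apply Rmult_le_compat_r. nra. lra. }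
    nra. }
  unfold Cc. apply Rmult_le_reg_r with (m * dl). nra.
  replace ((Q * Mx + hM * Mx) / m * (m * dl)) with (dl * (Q * Mx + hM * Mx)) by (field; lra).
  eapply Rle_trans; [|apply H0]. apply Rmult_le_compat_l. apply Rabs_pos. lra. }
assert (Hdu : forall y, 0 <= y < dl -> Rabs (du i y) <= Cd).
{ intros y Hy. rewrite (proj1 (Hrep i Hi) y Hy). rewrite Rabs_mult.
  assert (HH1 := HH_bound sig0 B (sig i) (bb i) (HB i Hi) dl M (f i) (proj1 Hdl) (Hfok i Hi) y Hy).
  assert (HE1 := EE_bounds sig0 B (sig i) (bb i) (HB i Hi) y ltac:(lra)).
  assert (0 <= hm sig0 B dl M) by (apply (hm_ge0 sig0 B (sig i) (bb i) (HB i Hi) dl M (f i) (proj1 Hdl) (Hfok i Hi))).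
  assert (Rabs (HH (sig i) (bb i) (f i) y) <= hM).
  { eapply Rle_trans. apply HH1. replace hM with (hM * 1) by ring. apply Rmult_le_compat; lra. }
  unfold Cd. apply Rmult_le_compat. apply Rabs_pos. apply Rabs_pos.
  eapply Rle_trans. apply Rabs_triang. lra.
  rewrite Rabs_right. apply HE1. left; apply exp_pos. }
assert (Hint : forall y, 0 < y < dl -> Rabs (d2u i y) <= C).
{ intros y Hy. specialize (Hode i y Hi Hy). unfold Lgen in Hode.
  destruct (HB i Hi) as [_ [_ [_ Hb]]]. destruct (Hb y ltac:(lra)) as [Hs1 [_ Hb1]].
  assert (Hsy : 0 < sig i y) by lra.
  assert (Hsq : sig0 ^ 2 <= sig i y ^ 2) by (apply pow_incr; lra).
  assert (d2u i y = (f i y - bb i y * du i y) * (2 / (sig i y) ^ 2)).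
  { rewrite <- Hode. field. lra. }
  rewrite H, Rabs_mult. unfold C.
  replace (2 * (M + B * Cd) / sig0 ^ 2) with ((M + B * Cd) * (2 / sig0 ^ 2)) by (field; lra).
  apply Rmult_le_compat. apply Rabs_pos. apply Rabs_pos.
  eapply Rle_trans. apply Rabs_triang. rewrite Rabs_Ropp, Rabs_mult.
  apply Rplus_le_compat. apply Hfb; auto; lra.
  apply Rmult_le_compat; try apply Rabs_pos; auto. apply Hdu; lra.
  rewrite Rabs_right. unfold Rdiv. apply Rmult_le_compat_l. lra. apply Rinv_le_contravar; lra.
  left. apply Rdiv_lt_0_compat. lra. apply pow_lt; lra. }
destruct (Req_dec x 0) as [E|E].
- subst x. destruct (Hreg i Hi) as [_ [_ [_ Hc2]]].
  assert (H0 : Ico 0 dl 0) by (unfold Ico; lra).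
  specialize (Hc2 0 H0). apply within_iff in Hc2.
  apply (limw_abs_le (fun y => 0 < y < dl) (d2u i) 0). apply accum_right; lra.
  apply limw_sub with (2 := Hc2). unfold Ico; intros; lra.
  intros y Hy. apply Hint. auto.
- apply Hint. lra.
Qed.

End Main.


Theorem propositionA1 (N : nat) (eta : R) (rho : nat -> R)
  (sig bb : nat -> R -> R) (sig0 : R)
  (HN : (1 <= N)%nat) (Heta : 0 <= eta)
  (Hrho_pos : forall i, (i < N)%nat -> 0 < rho i)
  (Hrho_sum : sum_lt N rho = 1)
  (Hsig0 : 0 < sig0)
  (Hsig_low : forall i x, (i < N)%nat -> 0 < x -> sig0 < sig i x)
  (Hbdd : exists B, forall i x, (i < N)%nat -> 0 < x ->
            Rabs (sig i x) <= B /\ Rabs (bb i x) <= B)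
  (Hsig_cont : forall i, (i < N)%nat -> rel_continuous_on (fun x => 0 <= x) (sig i))
  (Hb_cont : forall i, (i < N)%nat -> rel_continuous_on (fun x => 0 <= x) (bb i)) :
  (forall (delta : R) (f : nat -> R -> R),
     0 < delta -> admissible_f N delta f ->
     (exists du d2u : nat -> R -> R,
        solves N eta rho sig bb delta f (usol N eta rho sig bb delta f) du d2u) /\
     (forall u du d2u : nat -> R -> R,
        solves N eta rho sig bb delta f u du d2u ->
        forall i x, (i < N)%nat -> 0 <= x <= delta ->
          u i x = usol N eta rho sig bb delta f i x))
  /\
  (forall M : R, exists C delta0 : R, 0 < delta0 /\
     forall (delta : R) (f : nat -> R -> R),
       0 < delta < delta0 -> admissible_f N delta f ->
       (forall i x, (i < N)%nat -> 0 <= x < delta -> Rabs (f i x) <= M) ->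
       forall u du d2u : nat -> R -> R,
         solves N eta rho sig bb delta f u du d2u ->
         forall i x, (i < N)%nat -> 0 <= x < delta -> Rabs (d2u i x) <= C).
Proof.
exact (conj (part1 N eta rho sig bb sig0 HN Heta Hrho_pos Hrho_sum Hsig0 Hsig_low Hbdd Hsig_cont Hb_cont)
            (part2 N eta rho sig bb sig0 HN Heta Hrho_pos Hrho_sum Hsig0 Hsig_low Hbdd Hsig_cont Hb_cont)).
Qed.
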